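(* Let $\alpha, \beta_1, \beta_2 > 0$ and let $U_1, U_2, V_1, V_2$ be random variables with $U_1, U_2$ independent and $V_1, V_2$ independent. If $V_i \preceq_{(\alpha, \beta_i)} U_i$ for $i \in \{1,2\}$, then \[ \ln\!\big(e^{V_1} + e^{V_2}\big) \preceq_{(\alpha,\, \beta_1+\beta_2)} \ln\!\big(e^{U_1} + e^{U_2}\big). \]
   Context: For a random variable $X$ (possibly taking values $\pm\infty$) let $\bar{F}_X(x) = 1 - F_X(x)$ be its complementary CDF. Given $\alpha \ge 0$, $\beta \in [0,1]$, we write $V \preceq_{(\alpha,\beta)} U$ if $\bar{F}_V(x) \le \bar{F}_U(x-\alpha) + \beta$ for all $x \in [-\infty,\infty]$. *)

(* Defs.v *)
From HB Require Import structures.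
From mathcomp Require Import all_boot all_order all_algebra.
From mathcomp Require Import all_classical all_reals all_analysis.
From mathcomp Require Import measurable_realfun.
Set Implicit Arguments. Unset Strict Implicit. Unset Printing Implicit Defensive.
Import Order.TTheory GRing.Theory Num.Theory.
Local Open Scope classical_set_scope.
Local Open Scope ring_scope.
Local Open Scope ereal_scope.

Definition ccdf d (T : measurableType d) (R : realType)
  (P : probability T R) (X : T -> \bar R) (x : \bar R) : \bar R :=
  1 - P [set w | X w <= x].

(* V <=_(alpha,beta) U : ccdf_V(x) <= ccdf_U(x - alpha) + beta for all
   x in [-oo, +oo].  V and U may live on different probability spaces. *)
Definition ccdf_dom d1 d2 (T1 : measurableType d1) (T2 : measurableType d2)
  (R : realType) (P1 : probability T1 R) (P2 : probability T2 R)
  (alpha beta : R) (V : T1 -> \bar R) (U : T2 -> \bar R) : Prop :=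
  forall x : \bar R, ccdf P1 V x <= ccdf P2 U (x - alpha%:E) + beta%:E.

Definition indep2 d (T : measurableType d) (R : realType)
  (P : probability T R) (X Y : T -> \bar R) : Prop :=
  forall A B : set (\bar R), measurable A -> measurable B ->
    P (X @^-1` A `&` Y @^-1` B) = P (X @^-1` A) * P (Y @^-1` B).

(* ln(e^a + e^b) on extended reals, with e^{-oo} = 0, e^{+oo} = +oo,
   ln 0 = -oo, ln(+oo) = +oo. *)
Definition lse (R : realType) (a b : \bar R) : \bar R :=
  match a, b with
  | +oo, _ | _, +oo => +oo
  | -oo, y => y
  | x, -oo => x
  | (r%:E), (s%:E) => (ln (expR r + expR s))%:E
  end.

(* Main.v *)
Require Import Defs.
From HB Require Import structures.
From mathcomp Require Import all_boot all_order all_algebra.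
From mathcomp Require Import all_classical all_reals all_analysis.
From mathcomp Require Import measurable_realfun.
Import Order.TTheory GRing.Theory Num.Theory.
Local Open Scope classical_set_scope.
Local Open Scope ring_scope.

Section pointwise.
Context {R : realType}.
Local Open Scope ereal_scope.

Lemma lse_lt (x a b : \bar R) : (x < lse a b) = (expeR x < expeR a + expeR b).
Proof.
case: x => [x| |]; case: a => [a| |]; case: b => [b| |] //=;
  rewrite ?lte_fin ?addr0 ?add0r ?expR_gt0 ?ltry ?ltNyr //=.
- rewrite -[in RHS](@lnK _ (expR a + expR b)%R) ?ltr_expR //.
  by rewrite posrE addr_gt0 ?expR_gt0.
- by rewrite ltr_expR.
- by rewrite ltr_expR.
- by rewrite [X in _ = X]ltNge expR_ge0 /=; apply/negbTE; rewrite -leNgt leNye.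
- by rewrite addr_gt0 ?expR_gt0.
Qed.

Lemma lse_shift (a b : \bar R) (al : R) :
  lse (a + al%:E) (b + al%:E) = lse a b + al%:E.
Proof.
case: a => [a| |]; case: b => [b| |] //=.
congr EFin; rewrite !expRD -mulrDl lnM; first by rewrite expRK.
all: by rewrite posrE ?addr_gt0 ?expR_gt0.
Qed.

End pointwise.

Section meas.
Context {R : realType}.
Local Open Scope ereal_scope.

Lemma measurable_expeR : measurable_fun [set: \bar R] (@expeR R).
Proof.
rewrite (_ : expeR = fun x => if x == -oo then 0 else er_map expR x); last first.
  by apply: funext => -[].
apply: measurable_fun_ifT => //.
- apply: (measurable_fun_bool true).
  rewrite setTI (_ : _ @^-1` _ = [set -oo]); first exact: emeasurable_set1.
  by apply/seteqP; split => y /=; [move/eqP|move=> ->].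
- by apply: (@measurable_er_map _ R); exact: measurable_expR.
Qed.

Definition Sset (c : \bar R) : set (\bar R * \bar R) :=
  [set p | c < expeR p.1 + expeR p.2].

Lemma measurable_Sset c : measurable (Sset c).
Proof.
have mh : measurable_fun [set: \bar R * \bar R]
    (fun p : \bar R * \bar R => expeR p.1 + expeR p.2).
  apply: emeasurable_funD.
  - exact: measurableT_comp measurable_expeR measurable_fst.
  - exact: measurableT_comp measurable_expeR measurable_snd.
rewrite (_ : Sset c = setT `&` (fun p : \bar R * \bar R => expeR p.1 + expeR p.2) @^-1` `]c, +oo[).
  by apply: mh => //; exact: emeasurable_itv.
apply/seteqP; split => p /=; rewrite /Sset /= in_itv /= ?andbT.
- by move=> ?; split.
- by case.
Qed.

End meas.

Section sections.
Context {R : realType}.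
Local Open Scope ereal_scope.

Lemma sec_shape (c e : \bar R) : 0 <= e ->
  [set b | c < e + expeR b] = setT \/
  exists t, [set b | c < e + expeR b] = [set b | t < b].
Proof.
move=> e0.
have [ce|ec] := ltP c e.
  left; apply/seteqP; split => b //= _.
  exact: (lt_le_trans ce (leeDl _ (expeR_ge0 b))).
right; case: c ec => [r| |] ec.
- case: e e0 ec => [s| |] //= e0 ec.
  have [rs|rs] := eqVneq (r - s)%R 0%R.
    exists -oo; apply/seteqP; split => -[b| |] //=; rewrite ?lte_fin.
    + by rewrite ltNyr.
    + by rewrite addr0 ltNge -lee_fin ec.
    + by move=> _; rewrite -ltrBlDl rs expR_gt0.
    + by move=> _; rewrite addey // ltry.
  have hpos : (0 < r - s)%R by rewrite lt_neqAle eq_sym rs subr_ge0 -lee_fin.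
  exists (ln (r - s))%:E; apply/seteqP; split => -[b| |] //=; rewrite ?lte_fin.
    + by rewrite -ltrBlDl => h; rewrite -ltr_expR lnK.
    + by move=> _; rewrite ltry.
    + by rewrite addr0 ltNge -lee_fin ec.
    + by rewrite -ltrBlDl -ltr_expR lnK.
    + by move=> _; rewrite addey // ltry.
- by exists +oo; apply/seteqP; split => b /=; rewrite ltNge leey.
- by move: ec; rewrite leeNy_eq => /eqP ec; rewrite ec leeNy_eq in e0.
Qed.

End sections.

Section prod.
Context {R : realType}.
Local Open Scope ereal_scope.

Lemma dom_sec (mu nu : probability (\bar R) R) (be : R) : (0 <= be)%R ->
  (forall t, mu [set b | t < b] <= nu [set b | t < b] + be%:E) ->
  forall c e, 0 <= e ->
  mu [set b | c < e + expeR b] <= nu [set b | c < e + expeR b] + be%:E.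
Proof.
move=> be0 h c e e0; have [->|[t ->]] := @sec_shape R c e e0; last exact: h.
by rewrite !probability_setT leeDl // lee_fin.
Qed.

Definition mkMF d d' (T : measurableType d) (T' : measurableType d')
  (f : T -> T') (mf : measurable_fun setT f) : {mfun T >-> T'} :=
  HB.pack f (isMeasurableFun.Build _ _ _ _ f mf).
Arguments mkMF {d d' T T' f} mf.

Lemma joint_law d (T : measurableType d) (P : probability T R)
  (X Y : T -> \bar R) (mX : measurable_fun setT X) (mY : measurable_fun setT Y) :
  indep2 P X Y -> forall S, measurable S ->
  P ((fun w => (X w, Y w)) @^-1` S) =
  (distribution P (mkMF mX) \x distribution P (mkMF mY)) S.
Proof.
move=> iXY S mS.
have mp : measurable_fun setT (fun w => (X w, Y w)) by exact: measurable_fun_pair.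
symmetry.
apply: (@product_measure_unique _ _ _ _ _ _ _ (distribution P (mkMF mp))) => //.
Qed.

End prod.
Arguments mkMF {d d' T T' f} mf.

Section chain.
Context {R : realType}.
Local Open Scope ereal_scope.

Lemma xsec_S (c a : \bar R) :
  xsection (Sset c) a = [set b | c < expeR a + expeR b].
Proof. by apply/seteqP; split => b; rewrite /xsection /= inE. Qed.

Lemma ysec_S (c b : \bar R) :
  ysection (Sset c) b = [set a | c < expeR b + expeR a].
Proof. by apply/seteqP; split => a; rewrite /ysection /= inE addeC. Qed.

Lemma swap_prod (m1 m2 : probability (\bar R) R) S : measurable S ->
  (m1 \x m2) S = (m1 \x^ m2) S.
Proof.
move=> mS; apply: (@product_measure_unique _ _ _ _ _ _ _ (m1 \x^ m2)) => //.
by move=> A B mA mB /=; rewrite product_measure2E.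
Qed.

Lemma step (m : probability (\bar R) R) (mu nu : probability (\bar R) R)
  (be : R) (be0 : (0 <= be)%R) (sec : \bar R -> set (\bar R)) :
  (forall a, mu (sec a) <= nu (sec a) + be%:E) ->
  measurable_fun setT (fun a => mu (sec a)) ->
  measurable_fun setT (fun a => nu (sec a)) ->
  \int[m]_a mu (sec a) <= \int[m]_a nu (sec a) + be%:E.
Proof.
move=> h m1 m2.
apply: le_trans (_ : \int[m]_a (nu (sec a) + be%:E) <= _).
  apply: ge0_le_integral => //.
  exact: emeasurable_funD.
rewrite ge0_integralD //.
rewrite integral_cst //.
rewrite [_ * m _](_ : _ = be%:E) //.
by rewrite -[RHS]mule1; congr (_ * _); exact: probability_setT.
Qed.

Lemma chain (mu1 mu2 nu1 nu2 : probability (\bar R) R) (b1 b2 : R) :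
  (0 <= b1)%R -> (0 <= b2)%R ->
  (forall t, mu1 [set b | t < b] <= nu1 [set b | t < b] + b1%:E) ->
  (forall t, mu2 [set b | t < b] <= nu2 [set b | t < b] + b2%:E) ->
  forall c, (mu1 \x mu2) (Sset c) <= (nu1 \x nu2) (Sset c) + (b1 + b2)%:E.
Proof.
move=> b10 b20 h1 h2 c.
have mS := measurable_Sset c.
have A : (mu1 \x mu2) (Sset c) <= (mu1 \x nu2) (Sset c) + b2%:E.
  rewrite /product_measure1 /=.
  apply: (@step _ _ _ _ b20 (xsection (Sset c))).
  - by move=> a; rewrite xsec_S; apply: dom_sec => //; exact: expeR_ge0.
  - exact: measurable_fun_xsection.
  - exact: measurable_fun_xsection.
have B : (mu1 \x nu2) (Sset c) <= (nu1 \x nu2) (Sset c) + b1%:E.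
  rewrite !swap_prod // /product_measure2 /=.
  apply: (@step _ _ _ _ b10 (ysection (Sset c))).
  - by move=> a; rewrite ysec_S; apply: dom_sec => //; exact: expeR_ge0.
  - exact: measurable_fun_ysection.
  - exact: measurable_fun_ysection.
apply: le_trans A _.
rewrite EFinD addeA.
by apply: leeD.
Qed.

End chain.

Section final.
Context {R : realType}.
Local Open Scope ereal_scope.

Lemma ccdfE d (T : measurableType d) (P : probability T R) (X : T -> \bar R)
  (t : \bar R) : measurable [set w | t < X w] ->
  Defs.ccdf P X t = P [set w | t < X w].
Proof.
move=> mA; rewrite /Defs.ccdf.
have -> : [set w | X w <= t] = ~` [set w | t < X w].
  by apply/seteqP; split => w /=; rewrite leNgt => /negP.
rewrite probability_setC // oppeB ?addeA ?subee ?add0e //.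
Qed.

Lemma meas_gt d (T : measurableType d) (X : T -> \bar R) t :
  measurable_fun setT X -> measurable [set w | t < X w].
Proof.
move=> mX.
rewrite (_ : [set w | t < X w] = setT `&` X @^-1` `]t, +oo[%classic).
  by apply: mX => //; exact: emeasurable_itv.
apply/seteqP; split => w /=; rewrite in_itv /= ?andbT.
- by move=> ?; split.
- by case.
Qed.

Lemma lse_set d (T : measurableType d) (X Y : T -> \bar R) t :
  [set w | t < lse (X w) (Y w)] = (fun w => (X w, Y w)) @^-1` Sset (expeR t).
Proof. by apply/seteqP; split => w /=; rewrite /Sset /= lse_lt. Qed.

Lemma meas_lse d (T : measurableType d) (X Y : T -> \bar R) t :
  measurable_fun setT X -> measurable_fun setT Y ->
  measurable [set w | t < lse (X w) (Y w)].
Proof.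
move=> mX mY; rewrite lse_set -[X in measurable X]setTI.
have mp : measurable_fun setT (fun w => (X w, Y w)) by exact: measurable_fun_pair.
by apply: mp => //; exact: measurable_Sset.
Qed.

Lemma shift_meas (al : R) : measurable_fun [set: \bar R] (fun x : \bar R => x + al%:E).
Proof. by apply: emeasurable_funD => //; exact: measurable_cst. Qed.

End final.

Theorem mainTheorem4 (R : realType)
  (dU : measure_display) (TU : measurableType dU) (PU : probability TU R)
  (dV : measure_display) (TV : measurableType dV) (PV : probability TV R)
  (U1 U2 : TU -> \bar R) (V1 V2 : TV -> \bar R)
  (alpha beta1 beta2 : R)
  (halpha : 0 < alpha) (hbeta1 : 0 < beta1) (hbeta2 : 0 < beta2)
  (mU1 : measurable_fun setT U1) (mU2 : measurable_fun setT U2)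
  (mV1 : measurable_fun setT V1) (mV2 : measurable_fun setT V2)
  (iU : indep2 PU U1 U2) (iV : indep2 PV V1 V2)
  (h1 : ccdf_dom PV PU alpha beta1 V1 U1)
  (h2 : ccdf_dom PV PU alpha beta2 V2 U2) :
  ccdf_dom PV PU alpha (beta1 + beta2)
    (fun w => lse (V1 w) (V2 w)) (fun w => lse (U1 w) (U2 w)).
Proof.
move=> x.
have mU1' : measurable_fun setT (fun w => U1 w + alpha%:E)%E :=
  measurableT_comp (shift_meas alpha) mU1.
have mU2' : measurable_fun setT (fun w => U2 w + alpha%:E)%E :=
  measurableT_comp (shift_meas alpha) mU2.
have iU' : indep2 PU (fun w => U1 w + alpha%:E)%E (fun w => U2 w + alpha%:E)%E.
  move=> A B mA mB.
  have mA' := shift_meas alpha measurableT A mA; rewrite setTI in mA'.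
  have mB' := shift_meas alpha measurableT B mB; rewrite setTI in mB'.
  exact: (iU _ _ mA' mB').
have b10 : 0 <= beta1 := ltW hbeta1.
have b20 : 0 <= beta2 := ltW hbeta2.
have fa : (alpha%:E : \bar R) \is a fin_num by [].
have Hi : forall (V : TV -> \bar R) (U : TU -> \bar R) (mV : measurable_fun setT V)
    (mU : measurable_fun setT U) (mU' : measurable_fun setT (fun w => U w + alpha%:E)%E)
    (be : R),
    ccdf_dom PV PU alpha be V U ->
    forall t, (distribution PV (mkMF mV) [set b | t < b] <=
      distribution PU (mkMF mU') [set b | t < b] + be%:E)%E.
  move=> V U mV mU mU'0 be h t.
  have := h t.
  rewrite !ccdfE; [|exact: meas_gt|exact: meas_gt].
  rewrite /distribution /pushforward /=.
  have -> : (fun w => (U w + alpha%:E)%E) @^-1` [set b | (t < b)%E] =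
      [set w | (t + (- alpha)%:E < U w)%E] by
    apply/seteqP; split => w /=; rewrite EFinN lteBlDr.
  by [].
have H1 := Hi V1 U1 mV1 mU1 mU1' beta1 h1.
have H2 := Hi V2 U2 mV2 mU2 mU2' beta2 h2.
rewrite ccdfE; last exact: meas_lse.
rewrite ccdfE; last exact: meas_lse.
rewrite lse_set (@joint_law R _ _ PV _ _ mV1 mV2 iV _ (measurable_Sset _)).
apply: le_trans (@chain R _ _ _ _ _ _ b10 b20 H1 H2 _) _.
rewrite -(@joint_law R _ _ PU _ _ mU1' mU2' iU' _ (measurable_Sset _)) -lse_set.
have -> : [set w | (x < lse (U1 w + alpha%:E) (U2 w + alpha%:E))%E] =
    [set w | (x - alpha%:E < lse (U1 w) (U2 w))%E].
  by apply/seteqP; split => w /=; rewrite lse_shift ?EFinN lteBlDr.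
by [].
Qed.
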